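(* For every integer $r\ge 2$, the rightmost point of $P_r$ lies above the line $\ell_{r-1}$, and the leftmost point of $P_r$ lies below the line $\ell_{r-1}'$.
   Context: Define finite sets $P_r\subset\mathbb{Z}^2$ for integers $r\ge 0$ recursively: $P_0:=\{(0,0)\}$; for $r\ge 1$, $L_r:=P_{r-1}$, $R_r:=\{(x+\delta_r,\,y+\delta_r'):(x,y)\in L_r\}$ and $P_r:=L_r\cup R_r$, where $\delta_r:=3\cdot 4^{r-1}$ and $\delta_r':=(3r+1)\cdot 4^{r-1}$. For $r\ge 1$, let $\ell_r$ be the straight line through the rightmost point (largest $x$-coordinate) of $L_r$ and the leftmost point (smallest $x$-coordinate) of $R_r$. For $r\ge 2$, $R_r$ is the translate of $P_{r-1}=L_{r-1}\cup R_{r-1}$ by the vector $(\delta_r,\delta_r')$; let $\ell_{r-1}'$ denote the translate of the line $\ell_{r-1}$ by $(\delta_r,\delta_r')$. *)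

(* Defs.v *)
From mathcomp Require Import all_boot all_order all_algebra.
Set Implicit Arguments. Unset Strict Implicit. Unset Printing Implicit Defensive.
Import Order.TTheory GRing.Theory Num.Theory.
Local Open Scope ring_scope.

Definition pt := (int * int)%type.

Definition delta (r : nat) : int := (3 * 4 ^ (r.-1))%N%:Z.
Definition delta' (r : nat) : int := ((3 * r + 1) * 4 ^ (r.-1))%N%:Z.

Definition shift (r : nat) (p : pt) : pt := (p.1 + delta r, p.2 + delta' r).

Fixpoint P (r : nat) : seq pt :=
  match r with
  | 0%N => [:: (0, 0)]
  | r'.+1 => P r' ++ map (shift r'.+1) (P r')
  end.

Definition L (r : nat) : seq pt := P r.-1.
Definition R (r : nat) : seq pt := map (shift r) (P r.-1).

Definition is_rightmost (S : seq pt) (p : pt) : Prop :=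
  p \in S /\ forall q, q \in S -> q.1 <= p.1.
Definition is_leftmost (S : seq pt) (p : pt) : Prop :=
  p \in S /\ forall q, q \in S -> p.1 <= q.1.

Definition ratI (z : int) : rat := z%:~R.

Definition line_at (a b : pt) (x : int) : rat :=
  ratI a.2 + (ratI b.2 - ratI a.2) / (ratI b.1 - ratI a.1) * (ratI x - ratI a.1).

Definition above_line (a b p : pt) : Prop :=
  a.1 != b.1 /\ line_at a b p.1 < ratI p.2.
Definition below_line (a b p : pt) : Prop :=
  a.1 != b.1 /\ ratI p.2 < line_at a b p.1.

(* Main.v *)
Require Import Defs.
From mathcomp Require Import all_boot all_order all_algebra.
From mathcomp Require Import zify ring lra.
Import Order.TTheory GRing.Theory Num.Theory.
Local Open Scope ring_scope.

Definition top (n : nat) : pt := ((4 ^ n)%N%:Z - 1, (n * 4 ^ n)%N%:Z).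

Lemma P_bounds (n : nat) (q : pt) : q \in P n -> 0 <= q.1 <= (4 ^ n)%N%:Z - 1.
Proof.
elim: n q => [|n IH] q /=.
  by rewrite inE => /eqP ->.
rewrite mem_cat => /orP [/IH|/mapP [[x y] /IH]]; rewrite expnS.
  case: q => x y /=; lia.
move=> H -> /=; move: H; rewrite /delta /=; lia.
Qed.

Lemma P_left n (q : pt) : q \in P n -> q.1 = 0 -> q = (0, 0).
Proof.
elim: n q => [|n IH] q /=.
  by rewrite inE => /eqP ->.
rewrite mem_cat => /orP [/IH //|/mapP [[x y] Hq' ->]] /=.
move: (@P_bounds n _ Hq'); rewrite /delta /=; lia.
Qed.

Lemma P_right n (q : pt) : q \in P n -> q.1 = (4 ^ n)%N%:Z - 1 -> q = top n.
Proof.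
elim: n q => [|n IH] q /=.
  by rewrite inE => /eqP ->.
rewrite mem_cat => /orP [|/mapP [[x y] Hq' ->]] /=.
  case: q => x y /(@P_bounds n) /=; rewrite expnS; lia.
rewrite /delta /delta' /= => H.
have E : (x, y) = top n by apply: IH => //=; move: H; rewrite expnS; lia.
case: E => -> ->.
rewrite /top /shift /delta /delta' /= expnS.
congr pair; nia.
Qed.

Lemma P0 n : (0, 0) \in P n.
Proof. by elim: n => [|n IH] //=; rewrite mem_cat IH. Qed.

Lemma Ptop n : top n \in P n.
Proof.
elim: n => [|n IH] //=; rewrite mem_cat; apply/orP; right.
apply/mapP; exists (top n) => //.
rewrite /top /shift /delta /delta' /= expnS; congr pair; nia.
Qed.
Lemma crit_above (xa ya xb yb x y : rat) : xa < xb ->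
  (yb-ya)*(x-xa) < (y-ya)*(xb-xa) -> ya + (yb-ya)/(xb-xa)*(x-xa) < y.
Proof.
move=> h1 h2; have d0 : 0 < xb - xa by rewrite subr_gt0.
rewrite -ltrBrDl mulrAC ltr_pdivrMr //.
Qed.
Lemma crit_below (xa ya xb yb x y : rat) : xa < xb ->
  (y-ya)*(xb-xa) < (yb-ya)*(x-xa) -> y < ya + (yb-ya)/(xb-xa)*(x-xa).
Proof.
move=> h1 h2; have d0 : 0 < xb - xa by rewrite subr_gt0.
rewrite -ltrBlDl mulrAC ltr_pdivlMr //.
Qed.

Lemma right_is_top n p : is_rightmost (P n) p -> p = top n.
Proof.
case=> Hp Hq; apply: (@P_right n _ Hp).
have := Hq _ (Ptop n); have := @P_bounds n _ Hp; case: p Hp Hq => x y /= _ _.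
rewrite /top /=; lia.
Qed.

Lemma left_is_0 n p : is_leftmost (P n) p -> p = (0, 0).
Proof.
case=> Hp Hq; apply: (@P_left n _ Hp).
have := Hq _ (P0 n); have := @P_bounds n _ Hp; case: p Hp Hq => x y /= _ _; lia.
Qed.

Lemma leftR k b : is_leftmost (map (shift k.+1) (P k)) b -> b = shift k.+1 (0, 0).
Proof.
case=> /mapP [q Hq ->] H.
have := H (shift k.+1 (0,0)) (map_f _ (P0 k)).
have := @P_bounds k _ Hq.
move=> Hb Hl; congr shift; apply: (@P_left k _ Hq); move: Hb Hl.
clear H; case: q Hq => x y _ /=; rewrite /shift /delta /=; lia.
Qed.

Lemma geo1 (m kz : int) : 1 <= m -> 0 <= kz ->
  above_line (m-1, kz* m) (3* m, (3*kz+4)* m) (16* m-1, (kz+2)*(16* m)).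
Proof.
move=> hm hk; split; first by apply/eqP => /=; lia.
rewrite /line_at /ratI /= !(rmorphB, rmorphD, rmorphM) /=.
have hM : 1 <= (m%:~R : rat) by rewrite (_ : 1 = 1%:~R) // ler_int.
have hK : 0 <= (kz%:~R : rat) by rewrite (_ : 0 = 0%:~R) // ler_int.
move: (m%:~R : rat) (kz%:~R : rat) hM hK => M K hM hK.
apply: crit_above; first lra.
nra.
Qed.

Lemma geo2 (m kz : int) : 1 <= m -> 0 <= kz ->
  below_line (m-1 + 12* m, kz* m + (3*kz+7)*(4* m))
             (3* m + 12* m, (3*kz+4)* m + (3*kz+7)*(4* m)) (0, 0).
Proof.
move=> hm hk; split; first by apply/eqP => /=; lia.
rewrite /line_at /ratI /= !(rmorphB, rmorphD, rmorphM) /=.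
have hM : 1 <= (m%:~R : rat) by rewrite (_ : 1 = 1%:~R) // ler_int.
have hK : 0 <= (kz%:~R : rat) by rewrite (_ : 0 = 0%:~R) // ler_int.
move: (m%:~R : rat) (kz%:~R : rat) hM hK => M K hM hK.
apply: crit_below; first lra.
nra.
Qed.

Theorem lemma2 (r : nat) (hr : (2 <= r)%N) (a b : pt) :
  is_rightmost (L r.-1) a -> is_leftmost (R r.-1) b ->
  (forall p, is_rightmost (P r) p -> above_line a b p) /\
  (forall p, is_leftmost (P r) p -> below_line (shift r a) (shift r b) p).
Proof.
case: r hr => [|[|k]] // _.
rewrite /L /R /= => Ha Hb.
rewrite (@right_is_top _ _ Ha) (@leftR _ _ Hb).
have hm : 1 <= (4 ^ k)%N%:Z by have := expn_gt0 4 k; lia.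
have hk : 0 <= k%:Z by [].
have E1 : top k = ((4 ^ k)%N%:Z - 1, k%:Z * (4 ^ k)%N%:Z) by rewrite /top; congr pair; lia.
have E2 : shift k.+1 (0, 0) = (3 * (4 ^ k)%N%:Z, (3 * k%:Z + 4) * (4 ^ k)%N%:Z).
  by rewrite /shift /delta /delta' /=; congr pair; lia.
split => p.
- move=> Hp; rewrite (@right_is_top k.+2 _ Hp).
  have E3 : top k.+2 = (16 * (4 ^ k)%N%:Z - 1, (k%:Z + 2) * (16 * (4 ^ k)%N%:Z)).
    by rewrite /top !expnS; congr pair; lia.
  by rewrite E1 E2 E3; apply: geo1.
- move=> Hp; rewrite (@left_is_0 k.+2 _ Hp) E1 E2.
  have ES : forall q : pt, shift k.+2 q = (q.1 + 12 * (4 ^ k)%N%:Z, q.2 + (3 * k%:Z + 7) * (4 * (4 ^ k)%N%:Z)).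
    by move=> [x y]; rewrite /shift /delta /delta' /= expnS; congr pair; lia.
  rewrite !ES /=; exact: geo2.
Qed.
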